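(* Consider an instance of the Profile Matching Problem (as defined in the context), with metric $d$ equal to either the Hamming distance $d_h$ or the Weighted Hamming distance $d_w$. Let $\mu_1$ and $\mu_2$ be two stable matchings for this instance. Then $d\bigl(x,\mu_1(x)\bigr)=d\bigl(x,\mu_2(x)\bigr)$ for every participant $x\in\mathcal{M}\cup\mathcal{W}$.
   Context: Profile Matching Problem: there is a set $\mathcal{M}$ of $n$ men and a set $\mathcal{W}$ of $n$ women, and an integer $k\ge 1$. Each participant $x\in\mathcal{M}\cup\mathcal{W}$ has a profile $\mathbf{a}(x)=(a_1(x),\dots,a_k(x))\in Q_k=\{0,1\}^k$. Two metrics on $Q_k$ are considered: the Hamming distance $d_h(\mathbf{a},\mathbf{a}')=\sum_{i=1}^k\mathbf{1}(a_i\neq a_i')$ and the Weighted Hamming distance $d_w(\mathbf{a},\mathbf{a}')=\sum_{i=1}^k 2^{-i}\mathbf{1}(a_i\neq a_i')$. For participants $x,y$ write $d(x,y)=d(\mathbf{a}(x),\mathbf{a}(y))$. Each participant $x$ has a tie-breaking list $T_x$, a strict total order on the members of the opposite sex. The strict preference list $P_x$ of $x$ ranks the members of the opposite sex in increasing order of $d(x,\cdot)$, and members at equal distance from $x$ are ordered according to $T_x$; write $y\succ_x y'$ if $x$ ranks $y$ above $y'$ in $P_x$. A matching is a map $\mu$ from $\mathcal{M}\cup\mathcal{W}$ to itself with $\mu(m)\in\mathcal{W}\cup\{m\}$ for men, $\mu(w)\in\mathcal{M}\cup\{w\}$ for women, and $\mu(m)=w\iff\mu(w)=m$. A pair $(m,w)$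 is blocking for $\mu$ if $w\succ_m\mu(m)$ and $m\succ_w\mu(w)$; $\mu$ is stable if it has no blocking pair. *)

(* Defs.v *)
From mathcomp Require Import all_boot all_order all_algebra.
Set Implicit Arguments. Unset Strict Implicit. Unset Printing Implicit Defensive.
Import Order.TTheory GRing.Theory Num.Theory.
Local Open Scope ring_scope.

(* Profiles: elements of Q_k = {0,1}^k; coordinate i : 'I_k is the paper's a_{i+1}. *)
Definition profile (k : nat) := {ffun 'I_k -> bool}.

Definition hamming (k : nat) (a b : profile k) : rat :=
  \sum_(i < k) ((a i != b i)%:R).

Definition whamming (k : nat) (a b : profile k) : rat :=
  \sum_(i < k) ((a i != b i)%:R / 2%:R ^+ i.+1).

Inductive metric_kind := Hamming | WeightedHamming.

Definition dist (mk : metric_kind) (k : nat) : profile k -> profile k -> rat :=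
  match mk with Hamming => @hamming k | WeightedHamming => @whamming k end.

(* Participants: inl i = man i, inr j = woman j. *)
Definition participant (n : nat) := ('I_n + 'I_n)%type.

Definition is_man n (p : participant n) : bool := if p is inl _ then true else false.
Definition pidx n (p : participant n) : 'I_n := match p with inl i => i | inr i => i end.
Definition opposite n (x y : participant n) : bool := is_man x != is_man y.

(* Tie-breaking lists: T x : 'I_n -> nat ranks (by index) the members of the
   opposite sex of x (smaller rank = higher in T_x); it must be injective,
   i.e. a strict total order. *)
Definition tiebreak_ok n (T : participant n -> 'I_n -> nat) : Prop :=
  forall x, injective (T x).

(* y >_x z in P_x.  y must be of the opposite sex of x; z is either x itself
   (x unmatched: any member of the opposite sex is preferred to being single)
   or of the opposite sex, compared by distance then by T_x. *)
Definition prefers (mk : metric_kind) k n (a : participant n -> profile k)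
    (T : participant n -> 'I_n -> nat) (x y z : participant n) : Prop :=
  opposite x y /\
  (z = x \/
   (opposite x z /\
    (dist mk (a x) (a y) < dist mk (a x) (a z) \/
     (dist mk (a x) (a y) = dist mk (a x) (a z) /\
      (T x (pidx y) < T x (pidx z))%N)))).

Definition is_matching n (mu : participant n -> participant n) : Prop :=
  (forall m : 'I_n, mu (inl m) = inl m \/ exists w, mu (inl m) = inr w) /\
  (forall w : 'I_n, mu (inr w) = inr w \/ exists m, mu (inr w) = inl m) /\
  (forall (m w : 'I_n), mu (inl m) = inr w <-> mu (inr w) = inl m).

Definition blocking (mk : metric_kind) k n (a : participant n -> profile k)
    (T : participant n -> 'I_n -> nat) (mu : participant n -> participant n)
    (m w : 'I_n) : Prop :=
  prefers mk a T (inl m) (inr w) (mu (inl m)) /\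
  prefers mk a T (inr w) (inl m) (mu (inr w)).

Definition stable (mk : metric_kind) k n (a : participant n -> profile k)
    (T : participant n -> 'I_n -> nat) (mu : participant n -> participant n) : Prop :=
  is_matching mu /\ forall m w : 'I_n, ~ blocking mk a T mu m w.

(* Main.v *)
Require Import Defs.
From mathcomp Require Import all_boot all_order all_algebra.
Set Implicit Arguments. Unset Strict Implicit. Unset Printing Implicit Defensive.
Import Order.TTheory GRing.Theory Num.Theory.
Local Open Scope ring_scope.

Section Main.
Variables (P : finType) (opp : rel P) (d : P -> P -> rat) (T : P -> P -> nat).
Hypothesis dsym : forall x y, d x y = d y x.
Hypothesis Tinj : forall x y z, opp x y -> opp x z -> T x y = T x z -> y = z.
Definition prefb x y z := (d x y < d x z) || ((d x y == d x z) && (T x y < T x z)%N).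
Variables mu1 mu2 : P -> P.
Hypotheses (inv1 : involutive mu1) (inv2 : involutive mu2).
Hypotheses (opp1 : forall x, opp x (mu1 x)) (opp2 : forall x, opp x (mu2 x)).
Hypothesis nb1 : forall x y, opp x y -> prefb x y (mu1 x) -> prefb y x (mu1 y) -> False.
Hypothesis nb2 : forall x y, opp x y -> prefb x y (mu2 x) -> prefb y x (mu2 y) -> False.
Variable delta : rat.
Hypothesis hmin : forall z, d z (mu1 z) != d z (mu2 z) ->
  delta <= d z (mu1 z) /\ delta <= d z (mu2 z).

Lemma prefb_irr x y : prefb x y y = false.
Proof. by rewrite /prefb ltxx eqxx ltnn. Qed.

Definition Hp x := (d x (mu1 x) == delta) && prefb x (mu1 x) (mu2 x).

Lemma step x : Hp x -> Hp (mu2 (mu1 x)) && (d (mu2 (mu1 x)) (mu1 x) == delta).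
Proof.
case/andP => /eqP dxy pxy.
set y := mu1 x. set x' := mu2 y. set y' := mu1 x'.
have my : mu1 y = x by rewrite /y inv1.
have mx' : mu2 x' = y by rewrite /x' inv2.
have oxy : opp x y := opp1 x.
have dyx' : d y x' = delta.
  case: (ltgtP (d y x') delta) => // h.
  - have := @hmin y; rewrite my -/x' (dsym y x) dxy.
    case=> [|_]; first by apply/eqP => e; move: h; rewrite -e ltxx.
    by rewrite leNgt h.
  - exfalso; apply: (nb2 oxy pxy).
    by rewrite /prefb -/x' (dsym y x) dxy h.
have xx' : x' != x.
  apply/eqP => e; move: pxy; have -> : mu2 x = y by rewrite -e mx'.
  by rewrite -/y prefb_irr.
have Tyx : (T y x' < T y x)%N.
  case: (ltngtP (T y x') (T y x)) => // h.
  - exfalso; apply: (nb2 oxy pxy).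
    by rewrite /prefb -/x' (dsym y x) dxy dyx' ltxx eqxx h.
  - exfalso; move/eqP: xx'; apply.
    apply: (Tinj (opp2 y) _ h); by rewrite -my.
have pyx' : prefb y x' (mu1 y) by rewrite my /prefb dyx' (dsym y x) dxy ltxx eqxx Tyx.
have ox'y : opp x' y by rewrite -mx'; exact: opp2.
have dx'y' : d x' y' = delta.
  case: (ltgtP (d x' y') delta) => // h.
  - have := @hmin x'; rewrite -/y' mx' (dsym x' y) dyx'.
    case=> [|+ _]; first by apply/eqP => e; move: h; rewrite e ltxx.
    by rewrite leNgt h.
  - exfalso; apply: (nb1 ox'y _ pyx').
    by rewrite /prefb -/y' (dsym x' y) dyx' h.
have yy' : y' != y.
  apply/eqP => e; move/eqP: xx'; apply.
  by rewrite -my -e /y' inv1.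
have Tx'y : (T x' y' < T x' y)%N.
  case: (ltngtP (T x' y') (T x' y)) => // h.
  - exfalso; apply: (nb1 ox'y _ pyx').
    by rewrite /prefb -/y' (dsym x' y) dyx' dx'y' ltxx eqxx h.
  - exfalso; move/eqP: yy'; apply.
    apply: (Tinj (opp1 x') _ h); by rewrite -mx'.
rewrite /Hp -/y' mx' dx'y' (dsym x' y) dyx' eqxx /= /prefb dx'y'.
by rewrite (dsym x' y) dyx' ltxx eqxx Tx'y.
Qed.

Lemma main x : d x (mu1 x) = delta -> delta < d x (mu2 x) -> False.
Proof.
move=> dx lt.
pose S := [set z | Hp z].
pose sg := fun z => mu2 (mu1 z).
have sgi : injective sg.
  by move=> u v /(congr1 mu2); rewrite /sg !inv2 => /(congr1 mu1); rewrite !inv1.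
have sub : sg @: S \subset S.
  apply/subsetP => z /imsetP [w wS ->].
  move: wS; rewrite !inE => /step /andP [h _]; exact: h.
have eqS : sg @: S = S.
  by apply/eqP; rewrite eqEcard sub (card_imset _ sgi) leqnn.
have xS : x \in S by rewrite inE /Hp dx eqxx /prefb dx lt.
move: xS; rewrite -eqS => /imsetP [w wS ex].
move: wS; rewrite inE => /step /andP [_ /eqP h].
move: lt; rewrite ex /sg inv2 h ltxx //.
Qed.

End Main.

Lemma dist_sym mk k (a b : profile k) : dist mk a b = dist mk b a.
Proof. by case: mk => /=; rewrite /hamming /whamming; apply: eq_bigr => i _; rewrite eq_sym. Qed.

Section Bridge.
Variables (mk : metric_kind) (n k : nat) (a : participant n -> profile k)
  (T : participant n -> 'I_n -> nat) (hT : tiebreak_ok T).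

Lemma no_single_man mu : stable mk a T mu -> forall m, mu (inl m) <> inl m.
Proof.
move=> [[hM [hW hMW]] nb] m hm.
have [w hw] : exists w, mu (inr w) = inr w.
  case: (pickP (fun w => mu (inr w) == inr w)) => [w /eqP hw|h]; first by exists w.
  exfalso.
  have hw w : exists m', mu (inr w) = inl m'.
    by case: (hW w) => // e; move: (h w); rewrite e eqxx.
  pose g w := pidx (mu (inr w)).
  have gE w : mu (inr w) = inl (g w) by case: (hw w) => m' e; rewrite /g e.
  have gi : injective g.
    move=> w1 w2 e; have := proj2 (hMW (g w1) w1) (gE w1).
    by rewrite e (proj2 (hMW _ w2) (gE w2)); case.
  have [g' K1 K2] := injF_bij gi.
  have e := gE (g' m); rewrite K2 in e.
  by have := proj2 (hMW m (g' m)) e; rewrite hm.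
by apply: (nb m w); split; split => //; left.
Qed.

Lemma no_single_woman mu : stable mk a T mu -> forall w, mu (inr w) <> inr w.
Proof.
move=> [[hM [hW hMW]] nb] w hw.
have [m hm] : exists m, mu (inl m) = inl m.
  case: (pickP (fun m => mu (inl m) == inl m)) => [m /eqP hm|h]; first by exists m.
  exfalso.
  have hm m : exists w', mu (inl m) = inr w'.
    by case: (hM m) => // e; move: (h m); rewrite e eqxx.
  pose g m := pidx (mu (inl m)).
  have gE m : mu (inl m) = inr (g m) by case: (hm m) => w' e; rewrite /g e.
  have gi : injective g.
    move=> w1 w2 e; have := proj1 (hMW w1 (g w1)) (gE w1).
    by rewrite e (proj1 (hMW w2 _) (gE w2)); case.
  have [g' K1 K2] := injF_bij gi.
  have e := gE (g' w); rewrite K2 in e.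
  by have := proj1 (hMW (g' w) w) e; rewrite hw.
by apply: (nb m w); split; split => //; left.
Qed.

Lemma perfect mu : stable mk a T mu -> forall x, opposite x (mu x) /\ mu (mu x) = x.
Proof.
move=> st; have st' := st; case: st' => [[hM [hW hMW]] _] [m|w].
  case: (hM m) => [e|[w e]]; first by case: (no_single_man st e).
  by rewrite e; split => //; apply/hMW.
case: (hW w) => [e|[m e]]; first by case: (no_single_woman st e).
by rewrite e; split => //; apply/hMW.
Qed.

Definition dd (x y : participant n) := dist mk (a x) (a y).
Definition TT (x y : participant n) := T x (pidx y).

Lemma prefb_prefers x y z : opposite x y -> opposite x z ->
  prefb dd TT x y z -> prefers mk a T x y z.
Proof.
move=> oy oz h; split => //; right; split => //.
by case/orP: h => [h|/andP[/eqP h1 h2]]; [left|right].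
Qed.

Lemma nbsym mu : stable mk a T mu -> forall x y, opposite x y ->
  prefb dd TT x y (mu x) -> prefb dd TT y x (mu y) -> False.
Proof.
move=> st x y oxy h1 h2; have [_ nb] := st.
have [ox _] := perfect st x; have [oy _] := perfect st y.
case: x y oxy h1 h2 ox oy => [m|w] [m'|w'] //= _ h1 h2 ox oy.
  by apply: (nb m w'); split; apply: prefb_prefers.
by apply: (nb m' w); split; apply: prefb_prefers.
Qed.

Lemma TTinj x y z : opposite x y -> opposite x z -> TT x y = TT x z -> y = z.
Proof.
move=> oy oz /hT; case: x y z oy oz => [?|?] [?|?] [?|?] //= _ _ -> //.
Qed.

End Bridge.

Theorem lemma3p1 (mk : metric_kind) (n k : nat) (hk : (0 < k)%N)
    (a : participant n -> profile k) (T : participant n -> 'I_n -> nat)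
    (hT : tiebreak_ok T) (mu1 mu2 : participant n -> participant n) :
  stable mk a T mu1 -> stable mk a T mu2 ->
  forall x : participant n, dist mk (a x) (a (mu1 x)) = dist mk (a x) (a (mu2 x)).
Proof.
move=> s1 s2 x; apply/eqP; apply: contraT => hx.
pose d := dd mk a.
pose D := [pred z | d z (mu1 z) != d z (mu2 z)].
pose v z := Order.min (d z (mu1 z)) (d z (mu2 z)).
have Dx : D x by [].
case: (arg_minP (i0:=x) (P:=D) v Dx) => z Dz zmin.
have hmin : forall w, d w (mu1 w) != d w (mu2 w) ->
    v z <= d w (mu1 w) /\ v z <= d w (mu2 w).
  by move=> w /zmin; rewrite /v le_min => /andP.
have dsym : forall x y, d x y = d y x by move=> ? ?; apply: dist_sym.
have inv1 : involutive mu1 by move=> y; case: (perfect s1 y).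
have inv2 : involutive mu2 by move=> y; case: (perfect s2 y).
have o1 y : opposite y (mu1 y) by case: (perfect s1 y).
have o2 y : opposite y (mu2 y) by case: (perfect s2 y).
have [h|h|h] := ltgtP (d z (mu1 z)) (d z (mu2 z)).
- have ev : v z = d z (mu1 z) by rewrite /v min_l //; apply: ltW.
  exfalso; apply: (main dsym (TTinj hT) inv1 inv2 o1 o2 (nbsym s1) (nbsym s2) hmin (x:=z)).
    by rewrite ev.
  by rewrite ev.
- have hmin' : forall w, d w (mu2 w) != d w (mu1 w) ->
      v z <= d w (mu2 w) /\ v z <= d w (mu1 w).
    move=> w hw; have hw' : d w (mu1 w) != d w (mu2 w) by rewrite eq_sym.
    by case: (hmin w hw').
  have ev : v z = d z (mu2 z) by rewrite /v min_r //; apply: ltW.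
  exfalso; apply: (main dsym (TTinj hT) inv2 inv1 o2 o1 (nbsym s2) (nbsym s1) hmin' (x:=z)).
    by rewrite ev.
  by rewrite ev.
- by move: Dz; rewrite /D /= h eqxx.
Qed.
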